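(* There is a constant $\breve C_1>0$, independent of $N$ (depending only on $\Omega$), such that for all $f,g\in\mathcal C_{\rm per}$, $$\|\Delta_h(fg)\|_2\le\breve C_1\big(\|f\|_2+\|\Delta_hf\|_2\big)\big(\|g\|_2+\|\Delta_hg\|_2\big),$$ where $fg$ denotes the pointwise product.
   Context: Grid setting: $\Omega=(0,1)^3$, $N$ a positive integer, $h=1/N$. $\mathcal C_{\rm per}$ is the space of complex-valued grid functions on the points $(ih,jh,kh)$, $N$-periodic in each index. Discrete inner product $\langle f,g\rangle=h^3\sum_{i,j,k=1}^N\overline{f_{i,j,k}}\,g_{i,j,k}$, $\|f\|_2=\langle f,f\rangle^{1/2}$. Forward differences $D_xf_{i+1/2,j,k}=(f_{i+1,j,k}-f_{i,j,k})/h$ (similarly $D_y,D_z$), and $\Delta_h=D_x^2+D_y^2+D_z^2$ is the standard 7-point discrete Laplacian, $(\Delta_hf)_{i,j,k}=h^{-2}(f_{i+1,j,k}+f_{i-1,j,k}+f_{i,j+1,k}+f_{i,j-1,k}+f_{i,j,k+1}+f_{i,j,k-1}-6f_{i,j,k})$. *)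

(* Defs.v *)
From HB Require Import structures.
From mathcomp Require Import all_boot all_order all_algebra.
From mathcomp Require Import complex reals.
Set Implicit Arguments. Unset Strict Implicit. Unset Printing Implicit Defensive.
Import Order.TTheory GRing.Theory Num.Theory.
Local Open Scope ring_scope.

Section Grid.
Variable R : realType.

(* A complex-valued grid function on the points (ih, jh, kh), i,j,k : int. *)
Definition gridfun := int -> int -> int -> R[i].

Definition periodic (N : nat) (f : gridfun) : Prop :=
  forall i j k : int,
    [/\ f (i + N%:Z) j k = f i j k,
        f i (j + N%:Z) k = f i j k &
        f i j (k + N%:Z) = f i j k].

Definition hN (N : nat) : R := 1 / N%:R.

Definition lap_h (N : nat) (f : gridfun) : gridfun := fun i j k =>
  ((hN N)%:C)%C ^-2 *
  (f (i + 1) j k + f (i - 1) j k + f i (j + 1) k + f i (j - 1) k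
   + f i j (k + 1) + f i j (k - 1) - 6%:R * f i j k).

Definition gmul (f g : gridfun) : gridfun := fun i j k => f i j k * g i j k.

Definition norm2 (N : nat) (f : gridfun) : R :=
  Num.sqrt (hN N ^+ 3 *
    \sum_(i < N) \sum_(j < N) \sum_(k < N)
       (Normc.normc (f (i.+1)%:Z (j.+1)%:Z (k.+1)%:Z)) ^+ 2).

End Grid.

(* Main.v *)
Require Import Defs.
From HB Require Import structures.
From mathcomp Require Import all_boot all_order all_algebra.
From mathcomp Require Import complex reals.
From mathcomp Require Import trigo.
From mathcomp Require Import ring lra zify.
Require Import Defs.
Import Order.TTheory GRing.Theory Num.Theory.
Local Open Scope ring_scope.

Section CS.
Variable R : realFieldType.

Lemma cs_w (I : finType) (w x : I -> R) : (forall i, 0 <= w i) ->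
  (\sum_i w i * x i) ^+ 2 <= (\sum_i w i) * (\sum_i w i * x i ^+ 2).
Proof.
move=> w0.
rewrite expr2 !big_distrlr /=.
set L := (X in X <= _); set Rr := (X in _ <= X).
have S : Rr = \sum_i \sum_j w j * (w i * x i ^+ 2).
  by rewrite /Rr exchange_big.
have E1 : Rr + Rr = \sum_i \sum_j (w i * (w j * x j ^+ 2) + w j * (w i * x i ^+ 2)).
  rewrite {2}S /Rr -big_split /=; apply: eq_bigr => i _; by rewrite -big_split.
have E2 : L + L = \sum_i \sum_j ((w i * x i) * (w j * x j) + (w i * x i) * (w j * x j)).
  rewrite /L -big_split /=; apply: eq_bigr => i _; by rewrite -big_split.
suff : L + L <= Rr + Rr by lra.
rewrite E1 E2; apply: ler_sum => i _; apply: ler_sum => j _.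
have := mulr_ge0 (w0 i) (w0 j); have := sqr_ge0 (x i - x j); nra.
Qed.

Lemma cs (I : finType) (u v : I -> R) :
  (\sum_i u i * v i) ^+ 2 <= (\sum_i u i ^+ 2) * (\sum_i v i ^+ 2).
Proof.
rewrite expr2 !big_distrlr /=.
set L := (X in X <= _); set Rr := (X in _ <= X).
have S : Rr = \sum_i \sum_j u j ^+ 2 * v i ^+ 2.
  by rewrite /Rr exchange_big.
have E1 : Rr + Rr = \sum_i \sum_j (u i ^+ 2 * v j ^+ 2 + u j ^+ 2 * v i ^+ 2).
  rewrite {2}S /Rr -big_split /=; apply: eq_bigr => i _; by rewrite -big_split.
have E2 : L + L = \sum_i \sum_j ((u i * v i) * (u j * v j) + (u i * v i) * (u j * v j)).
  rewrite /L -big_split /=; apply: eq_bigr => i _; by rewrite -big_split.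
suff : L + L <= Rr + Rr by lra.
rewrite E1 E2; apply: ler_sum => i _; apply: ler_sum => j _.
have := sqr_ge0 (u i * v j - u j * v i); nra.
Qed.

End CS.
Arguments cs {R I}. Arguments cs_w {R I}.

Definition mm (N k : nat) : nat := minn k (N - k).

Lemma cnt_lt (N t : nat) : (\sum_(j < N) (j < t)%N = minn N t)%N.
Proof.
elim: N => [|N IH]; first by rewrite big_ord0 min0n.
rewrite big_ord_recr /= IH.
case: (ltnP N t) => h; lia.
Qed.

Lemma cnt_mm (N t : nat) : (\sum_(j < N) (mm N j <= t) <= t.*2.+1)%N.
Proof.
apply: (@leq_trans (\sum_(j < N) ((j < t.+1) + (N - j < t.+1)))%N).
  apply: leq_sum => j _; rewrite /mm.
  case: (minn j (N - j) <= t)%N / idP => h //.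
  case: (j < t.+1)%N / idP => h1; first by [].
  case: (N - j < t.+1)%N / idP => h2; first by [].
  exfalso; lia.
rewrite big_split /= cnt_lt.
rewrite (reindex_inj rev_ord_inj) /=.
have -> : (\sum_(j < N) (N - (N - j.+1) < t.+1) = \sum_(j < N) (j < t))%N.
  apply: eq_bigr => j _; have := ltn_ord j; move=> hj.
  by rewrite subKn.
rewrite cnt_lt; lia.
Qed.

Section Cnt.
Variable R : realFieldType.

Lemma tel_step (x : R) : 0 <= x ->
  1 / (1 + x ^+ 2) <= 4 / (x + 1) - 4 / (x + 2).
Proof.
move=> x0.
have H : 4 / (x + 1) - 4 / (x + 2) - 1 / (1 + x ^+ 2)
   = (3 * x ^+ 2 - 3 * x + 2) / ((x + 1) * (x + 2) * (1 + x ^+ 2)) :> R.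
  by field; apply/and3P; split; apply/negP => /eqP; nra.
have : 0 <= (3 * x ^+ 2 - 3 * x + 2) / ((x + 1) * (x + 2) * (1 + x ^+ 2)).
  apply: divr_ge0; first nra.
  by apply: mulr_ge0; [apply: mulr_ge0|]; nra.
rewrite -H; lra.
Qed.


Lemma sum_inv_sq (N : nat) :
  \sum_(k < N) 1 / (1 + (k%:R) ^+ 2) <= 4 - 4 / (N%:R + 1) :> R.
Proof.
elim: N => [|N IH]; first by rewrite big_ord0 add0r divr1 subrr.
rewrite big_ord_recr /=.
have := @tel_step (N%:R) (ler0n R N).
have E : (N.+1)%:R + 1 = N%:R + 2 :> R by rewrite -natr1; ring.
rewrite E; lra.
Qed.

Lemma sum_inv_sq4 (N : nat) : \sum_(k < N) 1 / (1 + (k%:R) ^+ 2) <= 4 :> R.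
Proof.
apply: le_trans (sum_inv_sq N) _.
have : 0 <= 4 / (N%:R + 1) :> R by apply: divr_ge0 => //; rewrite addr_ge0.
lra.
Qed.

Lemma inv_ge0 (x : R) : 0 <= x -> 0 <= 1 / (1 + x).
Proof. by move=> x0; apply: divr_ge0 => //; rewrite addr_ge0. Qed.
Arguments inv_ge0 {x}.

Lemma sum_mm (N : nat) : \sum_(k < N) 1 / (1 + ((mm N k)%:R) ^+ 2) <= 8 :> R.
Proof.
apply: (@le_trans _ _ (\sum_(k < N) (1 / (1 + (k%:R) ^+ 2) + 1 / (1 + ((N - k)%:R) ^+ 2)))).
  apply: ler_sum => k _.
  have h1 := inv_ge0 (sqr_ge0 ((k : nat)%:R : R)).
  have h2 := inv_ge0 (sqr_ge0 ((N - k)%:R : R)).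
  case: (leqP (k : nat) (N - k)%N) => h.
    have -> : (mm N k = k)%N by apply/minn_idPl.
    lra.
  have -> : (mm N k = N - k)%N by apply/minn_idPr; apply: ltnW.
  lra.
rewrite big_split /=.
have A := sum_inv_sq4 N.
suff : \sum_(k < N) 1 / (1 + ((N - k)%:R) ^+ 2) <= 4 :> R by lra.
rewrite (reindex_inj rev_ord_inj) /=.
have -> : \sum_(j < N) 1 / (1 + ((N - (N - j.+1))%:R) ^+ 2)
   = \sum_(j < N) 1 / (1 + ((lift ord0 j : 'I_N.+1)%:R) ^+ 2) :> R.
  by apply: eq_bigr => j _; rewrite subKn //=.
apply: le_trans (sum_inv_sq4 N.+1).
rewrite [X in _ <= X]big_ord_recl /=.
have := inv_ge0 (sqr_ge0 (0%:R : R)); lra.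
Qed.

Lemma inv_mono (a b : R) : 0 <= a -> a <= b ->
  1 / (1 + b) ^+ 2 <= 1 / (1 + a) ^+ 2.
Proof.
move=> a0 ab; rewrite !div1r lef_pV2 ?posrE; try nra.
Qed.
Arguments inv_mono {a b}.

Definition T3 (a b c : nat) : R :=
  ((b <= a)%N%:R * (c <= a)%N%:R) * (1 / (1 + (a%:R) ^+ 2) ^+ 2).

Lemma T3_ge0 a b c : 0 <= T3 a b c.
Proof.
rewrite /T3; apply: mulr_ge0; first by apply: mulr_ge0.
by apply: divr_ge0 => //; apply: exprn_ge0; rewrite addr_ge0 // sqr_ge0.
Qed.

Lemma split3 (x y z : nat) :
  1 / (1 + (x%:R) ^+ 2 + (y%:R) ^+ 2 + (z%:R) ^+ 2) ^+ 2
  <= T3 x y z + T3 y x z + T3 z x y.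
Proof.
have h1 := T3_ge0 x y z; have h2 := T3_ge0 y x z; have h3 := T3_ge0 z x y.
have X0 := sqr_ge0 (x%:R : R); have Y0 := sqr_ge0 (y%:R : R);
have Z0 := sqr_ge0 (z%:R : R).
rewrite -!addrA.
have [hx|hx] := boolP ((y <= x)%N && (z <= x)%N).
  case/andP: hx => hy hz.
  have : T3 x y z = 1 / (1 + (x%:R) ^+ 2) ^+ 2 by rewrite /T3 hy hz !mul1r.
  have := inv_mono X0 (_ : (x%:R) ^+ 2 <= (x%:R) ^+ 2 + ((y%:R) ^+ 2 + (z%:R) ^+ 2) :> R).
  move=> H E; rewrite E in h1 *; have := H ltac:(lra); lra.
have [hy|hy] := boolP ((x <= y)%N && (z <= y)%N).
  case/andP: hy => h1' h2'.
  have : T3 y x z = 1 / (1 + (y%:R) ^+ 2) ^+ 2 by rewrite /T3 h1' h2' !mul1r.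
  have := inv_mono Y0 (_ : (y%:R) ^+ 2 <= (x%:R) ^+ 2 + ((y%:R) ^+ 2 + (z%:R) ^+ 2) :> R).
  move=> H E; rewrite E in h2 *; have := H ltac:(lra); lra.
have hz1 : (x <= z)%N by move: hx hy; case: leqP; case: leqP; case: leqP => //=; lia.
have hz2 : (y <= z)%N by move: hx hy; case: leqP; case: leqP; case: leqP => //=; lia.
have : T3 z x y = 1 / (1 + (z%:R) ^+ 2) ^+ 2 by rewrite /T3 hz1 hz2 !mul1r.
have := inv_mono Z0 (_ : (z%:R) ^+ 2 <= (x%:R) ^+ 2 + ((y%:R) ^+ 2 + (z%:R) ^+ 2) :> R).
move=> H E; rewrite E in h3 *; have := H ltac:(lra); lra.
Qed.


Lemma psi_bound (m c1 c2 : R) : 0 <= m -> 0 <= c1 <= 2 * m + 1 -> 0 <= c2 <= 2 * m + 1 ->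
  c1 * c2 * (1 / (1 + m ^+ 2) ^+ 2) <= 5 * (1 / (1 + m ^+ 2)).
Proof.
move=> m0 /andP[c10 c11] /andP[c20 c21].
have p0 : 0 < 1 + m ^+ 2 by have := sqr_ge0 m; lra.
have H : 5 * (1 / (1 + m ^+ 2)) - (2 * m + 1) ^+ 2 * (1 / (1 + m ^+ 2) ^+ 2)
   = (m - 2) ^+ 2 / (1 + m ^+ 2) ^+ 2.
  by field; apply/negP => /eqP; lra.
have : 0 <= (m - 2) ^+ 2 / (1 + m ^+ 2) ^+ 2 by apply: divr_ge0; rewrite ?sqr_ge0 ?exprn_ge0 // ltW.
have ps : 0 <= 1 / (1 + m ^+ 2) ^+ 2 by apply: divr_ge0; rewrite ?exprn_ge0 // ltW.
have : c1 * c2 <= (2 * m + 1) ^+ 2 by rewrite expr2; apply: ler_pM.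
move=> h1 h2; rewrite -H in h2.
have := ler_wpM2r ps h1; lra.
Qed.

Lemma cnt_mmR (N : nat) (t : nat) :
  0 <= \sum_(j < N) ((mm N j <= t)%N%:R : R) <= 2 * (t%:R) + 1.
Proof.
rewrite -natr_sum ler0n /=.
have := cnt_mm N t; rewrite -(ler_nat R) => h; apply: le_trans h _.
by rewrite -addn1 natrD -mul2n natrM.
Qed.

Lemma core3 (N : nat) :
  \sum_(i < N) \sum_(j < N) \sum_(l < N) T3 (mm N i) (mm N j) (mm N l) <= 40.
Proof.
have E : forall i : 'I_N, \sum_(j < N) \sum_(l < N) T3 (mm N i) (mm N j) (mm N l)
  = (\sum_(j < N) ((mm N j <= mm N i)%N%:R : R)) * (\sum_(l < N) ((mm N l <= mm N i)%N%:R : R))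
    * (1 / (1 + ((mm N i)%:R) ^+ 2) ^+ 2).
  move=> i; rewrite big_distrlr /= mulr_suml; apply: eq_bigr => j _.
  by rewrite mulr_suml.
under eq_bigr => i _ do rewrite E.
apply: (@le_trans _ _ (\sum_(i < N) 5 * (1 / (1 + ((mm N i)%:R) ^+ 2)))).
  apply: ler_sum => i _; apply: psi_bound; rewrite ?ler0n //; exact: cnt_mmR.
rewrite -mulr_sumr; have := sum_mm N; lra.
Qed.

Lemma sum3 (N : nat) :
  \sum_(i < N) \sum_(j < N) \sum_(l < N)
     1 / (1 + ((mm N i)%:R) ^+ 2 + ((mm N j)%:R) ^+ 2 + ((mm N l)%:R) ^+ 2) ^+ 2 <= 120 :> R.
Proof.
apply: (@le_trans _ _ (\sum_(i < N) \sum_(j < N) \sum_(l < N)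
   (T3 (mm N i) (mm N j) (mm N l) + T3 (mm N j) (mm N i) (mm N l) + T3 (mm N l) (mm N i) (mm N j)))).
  apply: ler_sum => i _; apply: ler_sum => j _; apply: ler_sum => l _; exact: split3.
have -> : \sum_(i < N) \sum_(j < N) \sum_(l < N)
   (T3 (mm N i) (mm N j) (mm N l) + T3 (mm N j) (mm N i) (mm N l) + T3 (mm N l) (mm N i) (mm N j))
  = \sum_(i < N) \sum_(j < N) \sum_(l < N) T3 (mm N i) (mm N j) (mm N l)
  + \sum_(i < N) \sum_(j < N) \sum_(l < N) T3 (mm N j) (mm N i) (mm N l)
  + \sum_(i < N) \sum_(j < N) \sum_(l < N) T3 (mm N l) (mm N i) (mm N j).
  rewrite -!big_split /=; apply: eq_bigr => i _; rewrite -!big_split /=.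
  by apply: eq_bigr => j _; rewrite -!big_split.
have h1 := core3 N.
have h2 : \sum_(i < N) \sum_(j < N) \sum_(l < N) T3 (mm N j) (mm N i) (mm N l) <= 40.
  by rewrite exchange_big /=; exact: core3.
have h3 : \sum_(i < N) \sum_(j < N) \sum_(l < N) T3 (mm N l) (mm N i) (mm N j) <= 40.
  under eq_bigr => i _ do rewrite exchange_big /=.
  by rewrite exchange_big /=; exact: core3.
lra.
Qed.

End Cnt.

Local Open Scope complex_scope.

Section CplxLemmas.
Variable R : rcfType.
Local Notation C := (R[i]).
Local Notation nc := (@Normc.normc R).

Lemma nc_ge0 (z : C) : 0 <= nc z.
Proof. by case: z => a b; exact: sqrtr_ge0. Qed.

Lemma nc2 (z : C) : ((nc z) ^+ 2)%:C = z * conjc z.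
Proof.
case: z => a b /=.
rewrite sqr_sqrtr; last by rewrite addr_ge0 // sqr_ge0.
apply/eqP; rewrite eq_complex /=; apply/andP; split; apply/eqP; ring.
Qed.

Lemma ncR (r : R) : nc (r%:C) = `|r|.
Proof. by rewrite /Normc.normc /= expr0n /= addr0 sqrtr_sqr. Qed.

Lemma ncD (x y : C) : nc (x + y) <= nc x + nc y.
Proof. exact: (@le_normcD R x y). Qed.

Lemma ncM (x y : C) : nc (x * y) = nc x * nc y.
Proof. exact: Normc.normcM. Qed.

Lemma ncN (x : C) : nc (- x) = nc x.
Proof. exact: (@normcN R x). Qed.

Lemma nc_sum (I : finType) (F : I -> C) : nc (\sum_i F i) <= \sum_i nc (F i).
Proof.
elim/big_rec2: _ => [|i y1 y2 _ H]; first by rewrite Normc.normc0.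
by apply: le_trans (ncD _ _) _; rewrite lerD2l.
Qed.

Lemma nc_unit (z : C) : z * conjc z = 1 -> nc z = 1.
Proof.
move=> h; have : ((nc z) ^+ 2)%:C = 1%:C by rewrite nc2 h.
move/complexI => h2.
have := nc_ge0 z; have : (nc z - 1) * (nc z + 1) = 0 by rewrite -subr_sqr h2 expr1n subrr.
move/eqP; rewrite mulf_eq0 => /orP[/eqP|/eqP]; lra.
Qed.

Lemma nc_sub1 (z : C) : z * conjc z = 1 ->
  ((nc (1 - z)) ^+ 2)%:C = 2%:R - z - conjc z.
Proof.
move=> h; rewrite nc2 rmorphB /=.
have -> : (1 -i* 0 = 1 :> C)%C by apply/eqP; rewrite eq_complex /= oppr0 !eqxx.
have -> : (1 - z) * (1 - conjc z) = 1 - z - conjc z + z * conjc z by ring.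
rewrite h; ring.
Qed.

End CplxLemmas.
Arguments nc_ge0 {R}. Arguments nc2 {R}. Arguments ncR {R}. Arguments ncD {R}.
Arguments ncM {R}. Arguments ncN {R}. Arguments nc_sum {R I}. Arguments nc_unit {R}. Arguments nc_sub1 {R}.

Section Fourier.
Variable R : rcfType.
Local Notation C := (R[i]).
Local Notation nc := (@Normc.normc R).
Variable G : finZmodType.
Variable e : G -> G -> C.
Hypothesis eD : forall k m x, e (k + m) x = e k x * e m x.
Hypothesis eC : forall k x, e k x = e x k.
Hypothesis e0 : forall x, e 0 x = 1.
Hypothesis eS : forall x, \sum_k e k x = (#|G|%:R) * ((x == 0)%:R).
Hypothesis eJ : forall k x, conjc (e k x) = e (- k) x.

Local Notation M := (#|G|%:R : C).

Lemma eDr k x y : e k (x + y) = e k x * e k y.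
Proof. by rewrite eC eD -!(eC k). Qed.

Lemma eNk k x : e (- k) x * e k x = 1.
Proof. by rewrite -eD addNr e0. Qed.

Lemma eNx k x : e k (- x) = e (- k) x.
Proof.
have h1 : e k (- x) * e k x = 1 by rewrite -eDr addNr eC e0.
have h2 := eNk k x.
rewrite -[LHS]mulr1 -h2 mulrA [e k (- x) * _]mulrC -mulrA h1 mulr1 //.
Qed.

Lemma e_unit k x : e k x * conjc (e k x) = 1.
Proof. by rewrite eJ mulrC eNk. Qed.

Definition FT (phi : G -> C) (k : G) : C := \sum_x phi x * e (- k) x.

Lemma FT_inv (phi : G -> C) x : \sum_k FT phi k * e k x = M * phi x.
Proof.
rewrite /FT.
under eq_bigr => k _ do rewrite mulr_suml.
rewrite exchange_big /=.
have E : forall y, \sum_k phi y * e (- k) y * e k x = phi y * (M * ((- y + x == 0)%:R)).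
  move=> y; rewrite -eS mulr_sumr; apply: eq_bigr => k _; by rewrite -mulrA -eNx -eDr.
under eq_bigr => y _ do rewrite E.
rewrite (bigD1 x) //= big1 ?addr0; first by rewrite addNr eqxx mulr1 mulrC.
move=> y /negbTE hy; rewrite (_ : (- y + x == 0) = false) ?mulr0 //.
by rewrite addrC subr_eq0 eq_sym hy.
Qed.

Lemma FT_conj (phi : G -> C) k : conjc (FT phi k) = \sum_x conjc (phi x) * e k x.
Proof.
rewrite /FT rmorph_sum; apply: eq_bigr => x _.
by rewrite rmorphM /= eJ opprK.
Qed.

Lemma parseval (phi : G -> C) :
  \sum_k FT phi k * conjc (FT phi k) = M * \sum_x phi x * conjc (phi x).
Proof.
under eq_bigr => k _ do rewrite FT_conj mulr_sumr.
rewrite exchange_big /= mulr_sumr; apply: eq_bigr => x _.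
under eq_bigr => k _ do rewrite mulrCA.
rewrite -mulr_sumr FT_inv; ring.
Qed.

Lemma FT_conv (phi psi : G -> C) k :
  M * FT (fun x => phi x * psi x) k = \sum_m FT phi m * FT psi (k - m).
Proof.
rewrite {1}/FT mulr_sumr.
transitivity (\sum_x \sum_m FT phi m * (psi x * e (- (k - m)) x)).
  apply: eq_bigr => x _; rewrite !mulrA -FT_inv !mulr_suml.
  by apply: eq_bigr => m _; rewrite opprB eD; ring.
by rewrite exchange_big /=; apply: eq_bigr => m _; rewrite [FT psi _]/FT mulr_sumr.
Qed.

Lemma FT_shift (phi : G -> C) u k :
  FT (fun x => phi (x + u)) k = e k u * FT phi k.
Proof.
rewrite /FT (reindex_inj (addIr (- u))) /= mulr_sumr.
apply: eq_bigr => y _.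
by rewrite addrNK eDr eNx opprK; ring.
Qed.

Lemma FT_lin (a b : C) (phi psi : G -> C) k :
  FT (fun x => a * phi x + b * psi x) k = a * FT phi k + b * FT psi k.
Proof.
rewrite /FT !mulr_sumr -big_split /=; apply: eq_bigr => x _; ring.
Qed.


Lemma shift_sum (F : G -> R) m : \sum_k F (k - m) = \sum_k F k.
Proof. by rewrite [RHS](reindex_inj (addIr (- m))). Qed.

Lemma refl_sum (F : G -> R) k : \sum_m F (k - m) = \sum_m F m.
Proof.
rewrite [RHS](reindex_inj (h := fun m => k - m)) //.
by move=> a b /addrI /oppr_inj.
Qed.

Lemma youngA (p q : G -> R) : (forall m, 0 <= q m) ->
  \sum_k (\sum_m q m * p (k - m)) ^+ 2 <= (\sum_m q m) ^+ 2 * \sum_m p m ^+ 2.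
Proof.
move=> q0.
apply: (@le_trans _ _ (\sum_k (\sum_m q m) * (\sum_m q m * p (k - m) ^+ 2))).
  by apply: ler_sum => k _; apply: cs_w.
rewrite -mulr_sumr expr2 -mulrA; apply: ler_wpM2l; first by apply: sumr_ge0.
rewrite exchange_big /= mulr_suml le_eqVlt; apply/orP; left; apply/eqP.
apply: eq_bigr => m _; by rewrite -mulr_sumr (shift_sum (fun x => p x ^+ 2)).
Qed.

Lemma youngB (p q : G -> R) : (forall m, 0 <= q m) ->
  \sum_k (\sum_m p m * q (k - m)) ^+ 2 <= (\sum_m q m) ^+ 2 * \sum_m p m ^+ 2.
Proof.
move=> q0.
have E : forall k, \sum_m p m * q (k - m) = \sum_m q m * p (k - m).
  move=> k; rewrite [LHS](reindex_inj (h := fun m => k - m)); last first.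
    by move=> a b /addrI /oppr_inj.
  by apply: eq_bigr => m _; rewrite opprB addrCA subrr addr0 mulrC.
under eq_bigr => k _ do rewrite E.
exact: youngA.
Qed.

Variable s : R.
Variables u1 u2 u3 : G.

Definition Lap (phi : G -> C) (x : G) : C :=
  s%:C * (phi (x + u1) + phi (x - u1) + phi (x + u2) + phi (x - u2)
          + phi (x + u3) + phi (x - u3) - 6%:R * phi x).

Definition lam (k : G) : R :=
  s * (nc (1 - e k u1) ^+ 2 + nc (1 - e k u2) ^+ 2 + nc (1 - e k u3) ^+ 2).

Lemma FT_Lap (phi : G -> C) k : FT (Lap phi) k = - (lam k)%:C * FT phi k.
Proof.
transitivity (s%:C * (FT (fun x => phi (x + u1)) k + FT (fun x => phi (x - u1)) k
   + FT (fun x => phi (x + u2)) k + FT (fun x => phi (x - u2)) k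
   + FT (fun x => phi (x + u3)) k + FT (fun x => phi (x - u3)) k - 6%:R * FT phi k)).
  rewrite /FT /Lap mulr_sumr -sumrN -!big_split mulr_sumr /=.
  by apply: eq_bigr => x _; ring.
rewrite !FT_shift /lam !rmorphM !rmorphD /=.
have h : forall u, ((nc (1 - e k u)) ^+ 2)%:C = 2%:R - e k u - e k (- u).
  by move=> u; rewrite nc_sub1 ?e_unit // eJ eNx.
rewrite !h; ring.
Qed.

Lemma lam_ge0 k : 0 <= s -> 0 <= lam k.
Proof.
by move=> s0; apply: mulr_ge0 => //; rewrite !addr_ge0 ?sqr_ge0.
Qed.

Lemma nc1e_sub k m u :
  nc (1 - e k u) ^+ 2 <= 2 * nc (1 - e m u) ^+ 2 + 2 * nc (1 - e (k - m) u) ^+ 2.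
Proof.
have E : e k u = e (k - m) u * e m u by rewrite -eD subrK.
have h : nc (1 - e k u) <= nc (1 - e m u) + nc (1 - e (k - m) u).
  rewrite E.
  have -> : 1 - e (k - m) u * e m u = (1 - e m u) + e m u * (1 - e (k - m) u) by ring.
  by apply: (le_trans (ncD _ _)); rewrite ncM (nc_unit (e m u)) ?e_unit // mul1r.
set x := nc (1 - e k u) in h *; set y := nc (1 - e m u) in h *;
set z := nc (1 - e (k - m) u) in h *.
have hx : 0 <= x by exact: nc_ge0.
have h2 : x * x <= (y + z) * (y + z) by apply: ler_pM.
have := sqr_ge0 (y - z); rewrite !expr2 in h2 *; nra.
Qed.

Lemma lam_sub k m : 0 <= s -> lam k <= 2 * lam m + 2 * lam (k - m).
Proof.
move=> s0; rewrite /lam.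
have h1 := nc1e_sub k m u1; have h2 := nc1e_sub k m u2; have h3 := nc1e_sub k m u3.
rewrite !mulrA [2 * s]mulrC -!mulrA -mulrDr; apply: ler_wpM2l => //.
lra.
Qed.


Hypothesis s0 : 0 <= s.
Variable K0 : R.
Hypothesis hK : \sum_k (1 / (1 + lam k)) ^+ 2 <= K0.

Definition nrm (phi : G -> C) : R :=
  Num.sqrt ((#|G|%:R)^-1 * \sum_x nc (phi x) ^+ 2).

Local Notation MR := (#|G|%:R : R).

Lemma MR_gt0 : 0 < MR.
Proof. by rewrite ltr0n; apply/card_gt0P; exists 0. Qed.

Lemma parsevalR phi : \sum_k nc (FT phi k) ^+ 2 = MR * \sum_x nc (phi x) ^+ 2.
Proof.
apply: complexI; rewrite rmorphM !rmorph_sum /=.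
under eq_bigr do rewrite nc2.
under [in RHS]eq_bigr do rewrite nc2.
by rewrite parseval rmorph_nat.
Qed.

Lemma nrm_sq phi : nrm phi ^+ 2 = (MR ^+ 2)^-1 * \sum_k nc (FT phi k) ^+ 2.
Proof.
have h := MR_gt0.
rewrite /nrm sqr_sqrtr; last first.
  by apply: mulr_ge0; [rewrite invr_ge0 ltW | apply: sumr_ge0 => x _; apply: sqr_ge0].
rewrite parsevalR; field; rewrite gt_eqF //.
Qed.

Lemma nc_FTLap phi k : nc (FT (Lap phi) k) = lam k * nc (FT phi k).
Proof.
by rewrite FT_Lap ncM -rmorphN ncR normrN ger0_norm // lam_ge0.
Qed.

Lemma nrmLap_sq phi :
  nrm (Lap phi) ^+ 2 = (MR ^+ 2)^-1 * \sum_k (lam k * nc (FT phi k)) ^+ 2.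
Proof. by rewrite nrm_sq; under eq_bigr do rewrite nc_FTLap. Qed.

Lemma K0_ge0 : 0 <= K0.
Proof. by apply: le_trans hK; apply: sumr_ge0 => k _; apply: sqr_ge0. Qed.

Lemma sobolev phi :
  (\sum_k nc (FT phi k)) ^+ 2 <=
  K0 * (2 * \sum_k nc (FT phi k) ^+ 2 + 2 * \sum_k (lam k * nc (FT phi k)) ^+ 2).
Proof.
have E : \sum_k nc (FT phi k) =
   \sum_k ((1 + lam k) * nc (FT phi k)) * (1 / (1 + lam k)).
  apply: eq_bigr => k _; have := lam_ge0 k s0 => hl.
  field; apply/negP => /eqP; lra.
rewrite E; apply: (le_trans (cs _ _)).
rewrite mulrC; apply: ler_pM.
- by apply: sumr_ge0 => k _; apply: sqr_ge0.
- by apply: sumr_ge0 => k _; apply: sqr_ge0.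
- exact: hK.
rewrite !mulr_sumr -big_split /=; apply: ler_sum => k _.
have := lam_ge0 k s0; have := nc_ge0 (FT phi k).
set l := lam k; set a := nc (FT phi k) => a0 l0.
have := sqr_ge0 (l * a - a); rewrite !expr2; nra.
Qed.

Lemma FT_prod phi psi k :
  FT (fun x => phi x * psi x) k = (#|G|%:R)^-1 * \sum_m FT phi m * FT psi (k - m).
Proof.
rewrite -FT_conv mulrA mulVf ?mul1r //.
by rewrite pnatr_eq0 -lt0n; apply/card_gt0P; exists 0.
Qed.

Lemma conv_pt phi psi k :
  lam k * nc (FT (fun x => phi x * psi x) k) <=
  MR^-1 * (2 * \sum_m (lam m * nc (FT phi m)) * nc (FT psi (k - m))
         + 2 * \sum_m nc (FT phi m) * (lam (k - m) * nc (FT psi (k - m)))).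
Proof.
have h := MR_gt0.
rewrite FT_prod ncM.
have -> : nc ((#|G|%:R)^-1 : C) = MR^-1.
  have -> : ((#|G|%:R : C)^-1) = (MR^-1)%:C by rewrite fmorphV /= rmorph_nat.
  by rewrite ncR ger0_norm // invr_ge0 ltW.
rewrite mulrCA; apply: ler_wpM2l; first by rewrite invr_ge0 ltW.
apply: (@le_trans _ _ (lam k * \sum_m nc (FT phi m) * nc (FT psi (k - m)))).
  apply: ler_wpM2l; first exact: lam_ge0.
  apply: (le_trans (nc_sum _)); apply: ler_sum => m _; rewrite ncM //.
rewrite !mulr_sumr -big_split /=; apply: ler_sum => m _.
have := lam_sub k m s0; have := lam_ge0 m s0; have := lam_ge0 (k - m) s0.
have := nc_ge0 (FT phi m); have := nc_ge0 (FT psi (k - m)).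
set a := nc (FT phi m); set b := nc (FT psi (k - m)).
move=> b0 a0 l1 l2 hl.
have ab : 0 <= a * b by apply: mulr_ge0.
have := ler_wpM2r ab hl; rewrite !mulrA; lra.
Qed.

Lemma fin_ineq (t K P Q P' Q' Sa Sb La Lb Aa Ab Z : R) :
  0 < t -> 0 <= K -> 0 <= P -> 0 <= Q -> 0 <= P' -> 0 <= Q' ->
  P ^+ 2 = t * Sa -> Q ^+ 2 = t * La -> P' ^+ 2 = t * Sb -> Q' ^+ 2 = t * Lb ->
  Aa ^+ 2 <= K * (2 * Sa + 2 * La) -> Ab ^+ 2 <= K * (2 * Sb + 2 * Lb) ->
  Z <= t * t * (8 * Ab ^+ 2 * La + 8 * Aa ^+ 2 * Lb) ->
  Z <= 32 * K * (P + Q) ^+ 2 * (P' + Q') ^+ 2.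
Proof.
move=> t0 K0' P0 Q0 P'0 Q'0 eP eQ eP' eQ' hA hB hZ.
have V : t * Aa ^+ 2 <= 2 * K * (P ^+ 2 + Q ^+ 2).
  rewrite eP eQ; have := ler_wpM2l (ltW t0) hA; lra.
have U : t * Ab ^+ 2 <= 2 * K * (P' ^+ 2 + Q' ^+ 2).
  rewrite eP' eQ'; have := ler_wpM2l (ltW t0) hB; lra.
have E : t * t * (8 * Ab ^+ 2 * La + 8 * Aa ^+ 2 * Lb)
       = 8 * ((t * Ab ^+ 2) * Q ^+ 2) + 8 * ((t * Aa ^+ 2) * Q' ^+ 2).
  by rewrite eQ eQ'; ring.
rewrite E in hZ.
have s1 : P ^+ 2 + Q ^+ 2 <= (P + Q) ^+ 2 by rewrite sqrrD; nra.
have s2 : P' ^+ 2 + Q' ^+ 2 <= (P' + Q') ^+ 2 by rewrite sqrrD; nra.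
have s3 : Q ^+ 2 <= (P + Q) ^+ 2 by rewrite sqrrD; nra.
have s4 : Q' ^+ 2 <= (P' + Q') ^+ 2 by rewrite sqrrD; nra.
have T1 : (t * Ab ^+ 2) * Q ^+ 2 <= 2 * K * (P' + Q') ^+ 2 * (P + Q) ^+ 2.
  apply: ler_pM => //; first by apply: mulr_ge0; [exact: ltW| exact: sqr_ge0].
  - exact: sqr_ge0.
  - apply: le_trans U _; apply: ler_wpM2l => //; nra.
have T2 : (t * Aa ^+ 2) * Q' ^+ 2 <= 2 * K * (P + Q) ^+ 2 * (P' + Q') ^+ 2.
  apply: ler_pM => //; first by apply: mulr_ge0; [exact: ltW| exact: sqr_ge0].
  - exact: sqr_ge0.
  - apply: le_trans V _; apply: ler_wpM2l => //; nra.
have : 2 * K * (P' + Q') ^+ 2 * (P + Q) ^+ 2 = 2 * K * (P + Q) ^+ 2 * (P' + Q') ^+ 2 by ring.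
move=> E2; rewrite E2 in T1; lra.
Qed.

Theorem main_abs phi psi :
  nrm (Lap (fun x => phi x * psi x)) ^+ 2
  <= 32 * K0 * (nrm phi + nrm (Lap phi)) ^+ 2 * (nrm psi + nrm (Lap psi)) ^+ 2.
Proof.
have h := MR_gt0.
set a := fun k => nc (FT phi k); set b := fun k => nc (FT psi k).
have a0 : forall k, 0 <= a k by move=> k; exact: nc_ge0.
have b0 : forall k, 0 <= b k by move=> k; exact: nc_ge0.
apply: (@fin_ineq ((MR ^+ 2)^-1) K0 _ _ _ _
   (\sum_k a k ^+ 2) (\sum_k b k ^+ 2)
   (\sum_k (lam k * a k) ^+ 2) (\sum_k (lam k * b k) ^+ 2)
   (\sum_k a k) (\sum_k b k)).
- by rewrite invr_gt0 exprn_gt0.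
- exact: K0_ge0.
- exact: sqrtr_ge0.
- exact: sqrtr_ge0.
- exact: sqrtr_ge0.
- exact: sqrtr_ge0.
- exact: nrm_sq.
- exact: nrmLap_sq.
- exact: nrm_sq.
- exact: nrmLap_sq.
- exact: sobolev.
- exact: sobolev.
rewrite nrmLap_sq.
set X := fun k => \sum_m (lam m * a m) * b (k - m).
set Y := fun k => \sum_m a m * (lam (k - m) * b (k - m)).
apply: (@le_trans _ _ ((MR ^+ 2)^-1 * \sum_k (MR^-1 * (2 * X k + 2 * Y k)) ^+ 2)).
  apply: ler_wpM2l; first by rewrite invr_ge0 exprn_ge0 // ltW.
  apply: ler_sum => k _.
  have h1 := conv_pt phi psi k.
  have h0 : 0 <= lam k * nc (FT (fun x => phi x * psi x) k).
    by apply: mulr_ge0; [exact: lam_ge0| exact: nc_ge0].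
  rewrite !expr2; apply: ler_pM => //.
have E : forall k, (MR^-1 * (2 * X k + 2 * Y k)) ^+ 2 <= (MR ^+ 2)^-1 * (8 * X k ^+ 2 + 8 * Y k ^+ 2).
  move=> k; rewrite exprMn exprVn; apply: ler_wpM2l; first by rewrite invr_ge0 exprn_ge0 // ltW.
  have := sqr_ge0 (X k - Y k); rewrite !expr2; nra.
apply: (@le_trans _ _ ((MR ^+ 2)^-1 * \sum_k (MR ^+ 2)^-1 * (8 * X k ^+ 2 + 8 * Y k ^+ 2))).
  apply: ler_wpM2l; first by rewrite invr_ge0 exprn_ge0 // ltW.
  by apply: ler_sum => k _; exact: E.
rewrite -mulr_sumr mulrA big_split /= -!mulr_sumr.
apply: ler_wpM2l; first by rewrite mulr_ge0 // invr_ge0 exprn_ge0 // ltW.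
have hX : \sum_k X k ^+ 2 <= (\sum_k b k) ^+ 2 * \sum_k (lam k * a k) ^+ 2.
  exact: (youngB (fun m => lam m * a m) b b0).
have hY : \sum_k Y k ^+ 2 <= (\sum_k a k) ^+ 2 * \sum_k (lam k * b k) ^+ 2.
  exact: (youngA (fun m => lam m * b m) a a0).
lra.
Qed.

End Fourier.

Section Omega.
Variable R : realType.
Local Notation C := (R[i]).
Local Notation nc := (@Normc.normc R).
Variable N : nat.
Hypothesis N0 : (0 < N)%N.

Definition tt0 : R := pi *+ 2 / N%:R.
Definition om : C := cos tt0 +i* sin tt0.

Lemma NR0 : (N%:R : R) != 0.
Proof. by rewrite pnatr_eq0 -lt0n. Qed.

Lemma om_pow m : om ^+ m = cos (m%:R * tt0) +i* sin (m%:R * tt0).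
Proof.
elim: m => [|m IH].
  by rewrite expr0 mul0r cos0 sin0.
rewrite exprSr IH -natr1 mulrDl mul1r cosD sinD.
by apply/eqP; rewrite eq_complex /=; apply/andP; split; apply/eqP; ring.
Qed.

Lemma om_N : om ^+ N = 1.
Proof.
rewrite om_pow.
have -> : N%:R * tt0 = pi *+ 2 by rewrite /tt0; field; exact: NR0.
by rewrite cos2pi sin2pi.
Qed.

Lemma om_unit : om * conjc om = 1.
Proof.
rewrite /om /=; apply/eqP; rewrite eq_complex /=; apply/andP; split; apply/eqP.
  by have := cos2Dsin2 tt0; rewrite !expr2 => <-; ring.
ring.
Qed.

Lemma omX_unit m : om ^+ m * conjc (om ^+ m) = 1.
Proof. by rewrite rmorphXn /= -exprMn om_unit expr1n. Qed.

Lemma om_mod a b : (a = b %[mod N])%N -> om ^+ a = om ^+ b.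
Proof.
move=> h.
rewrite (divn_eq a N) (divn_eq b N) h !exprD (mulnC (a %/ N)%N) (mulnC (b %/ N)%N) !exprM om_N !expr1n //.
Qed.


Lemma nc2RI (z : C) : nc z ^+ 2 = complex.Re z ^+ 2 + complex.Im z ^+ 2.
Proof. by case: z => a b /=; rewrite sqr_sqrtr // addr_ge0 // sqr_ge0. Qed.

Lemma nc_conj (z : C) : nc (conjc z) = nc z.
Proof. by case: z => a b; rewrite /Normc.normc /= sqrrN. Qed.

Lemma conjc1' : conjc (1 : C) = 1.
Proof. by apply/eqP; rewrite eq_complex /= oppr0 !eqxx. Qed.

Lemma cos_nonpos (th : R) : pi / 2 <= th <= pi -> cos th <= 0.
Proof.
move=> /andP[h1 h2].
have := sinBpihalf th => E.
have : 0 <= sin (th - pi / 2).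
  apply: sin_ge0_pi; apply/andP; split; first lra.
  have := pi_gt0 R; lra.
rewrite E; lra.
Qed.

Lemma direct m : (N <= 4 * m)%N -> (2 * m <= N)%N ->
  8 * (m%:R) ^+ 2 <= (N%:R) ^+ 2 * nc (1 - om ^+ m) ^+ 2 :> R.
Proof.
move=> h1 h2.
have hN : 0 < (N%:R : R) by rewrite ltr0n.
have r1 : (N%:R : R) <= 4 * m%:R by rewrite -[4]/(4%:R) -natrM ler_nat.
have r2 : 2 * (m%:R : R) <= N%:R by rewrite -[2]/(2%:R) -natrM ler_nat.
have p0 := pi_gt0 R.
set th := m%:R * tt0.
have E1 : th - pi / 2 = pi * (4 * m%:R - N%:R) / (2 * N%:R).
  by rewrite /th /tt0; field; exact: NR0.
have E2 : pi - th = pi * (N%:R - 2 * m%:R) / N%:R.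
  by rewrite /th /tt0; field; exact: NR0.
have c0 : cos th <= 0.
  apply: cos_nonpos; apply/andP; split.
    have : 0 <= pi * (4 * m%:R - N%:R) / (2 * N%:R) :> R.
      apply: divr_ge0; last lra.
      apply: mulr_ge0; lra.
    rewrite -E1; lra.
  have : 0 <= pi * (N%:R - 2 * m%:R) / N%:R :> R.
    apply: divr_ge0; last lra.
    apply: mulr_ge0; lra.
  rewrite -E2; lra.
rewrite om_pow nc2RI /=.
have := cos2Dsin2 th; rewrite -/th => cs1.
have m0 : 0 <= (m%:R : R) by [].
have : (1 - cos th) ^+ 2 + (0 - sin th) ^+ 2 = 2 - 2 * cos th.
  by rewrite !expr2 in cs1 *; nra.
move=> E.
rewrite E.
have : 8 * (m%:R : R) ^+ 2 <= 2 * (N%:R) ^+ 2 by rewrite !expr2; nra.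
have : 0 <= (N%:R : R) ^+ 2 * (- 2 * cos th) by apply: mulr_ge0; [apply: sqr_ge0| lra].
move=> h3 h4.
have -> : (N%:R : R) ^+ 2 * (2 - 2 * cos th) = 2 * (N%:R) ^+ 2 + (N%:R) ^+ 2 * (- 2 * cos th) by ring.
lra.
Qed.

Lemma doubling m : nc (1 - om ^+ (2 * m)) <= 2 * nc (1 - om ^+ m).
Proof.
rewrite mulnC exprM.
have -> : 1 - (om ^+ m) ^+ 2 = (1 - om ^+ m) * (1 + om ^+ m) by ring.
rewrite ncM mulrC; apply: ler_wpM2r; first exact: nc_ge0.
apply: (le_trans (ncD _ _)); rewrite Normc.normc1 (nc_unit (om ^+ m)) ?omX_unit //.
Qed.

Lemma low_ind d : forall m, (N - m <= d)%N -> (0 < m)%N -> (2 * m <= N)%N ->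
  8 * (m%:R) ^+ 2 <= (N%:R) ^+ 2 * nc (1 - om ^+ m) ^+ 2 :> R.
Proof.
elim: d => [|d IH] m h1 h2 h3; case: (leqP N (4 * m)) => h4; try exact: direct.
  exfalso; lia.
have := IH (2 * m)%N ltac:(lia) ltac:(lia) ltac:(lia).
have := doubling m; have := nc_ge0 (1 - om ^+ (2 * m)); have := nc_ge0 (1 - om ^+ m).
set x := nc (1 - om ^+ (2 * m)); set y := nc (1 - om ^+ m) => y0 x0 hd.
rewrite natrM => H.
have : x ^+ 2 <= 4 * y ^+ 2 by rewrite !expr2; nra.
move=> H2.
have : (N%:R : R) ^+ 2 * x ^+ 2 <= (N%:R) ^+ 2 * (4 * y ^+ 2).
  by apply: ler_wpM2l => //; apply: sqr_ge0.
move: H; rewrite exprMn; lra.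
Qed.

Lemma low j : (j < N)%N ->
  8 * ((mm N j)%:R) ^+ 2 <= (N%:R) ^+ 2 * nc (1 - om ^+ j) ^+ 2 :> R.
Proof.
move=> hj.
case: (posnP j) => [->|j0].
  rewrite /mm min0n expr0n /= mulr0; apply: mulr_ge0; apply: sqr_ge0.
have hm0 : (0 < mm N j)%N by rewrite /mm; lia.
have hm2 : (2 * mm N j <= N)%N by rewrite /mm; lia.
have -> : nc (1 - om ^+ j) = nc (1 - om ^+ (mm N j)).
  case: (leqP j (N - j)) => h.
    by have -> : mm N j = j by apply/minn_idPl.
  have -> : mm N j = (N - j)%N by apply/minn_idPr; apply: ltnW.
  have -> : om ^+ (N - j) = conjc (om ^+ j).
    rewrite -[LHS]mulr1 -(omX_unit j) mulrA -exprD subnK ?om_N ?mul1r //.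
    exact: ltnW.
  by rewrite -nc_conj rmorphB /=; congr Normc.normc; congr (_ - _); apply/eqP; rewrite eq_complex /= oppr0 !eqxx.
exact: (@low_ind (N - mm N j)%N (mm N j) (leqnn _) hm0 hm2).
Qed.

End Omega.
Arguments om_mod {R N} N0 {a b}. Arguments omX_unit {R N} m. Arguments om_N {R N} N0.
Arguments low {R N} N0 {j}. Arguments om_unit {R N}. Arguments om_pow {R N}.

Section GDef.
Variable n : nat.
Definition G3 := ('I_n.+1 * 'I_n.+1 * 'I_n.+1)%type.
HB.instance Definition _ := GRing.Zmodule.on G3.
HB.instance Definition _ := Finite.on G3.
End GDef.

Lemma modNeg (N a x : nat) : (a <= N)%N -> ((N - a) %% N * x + a * x = N * x %[mod N])%N.
Proof. by move=> ha; rewrite -modnDml modnMml modnDml -mulnDl subnK. Qed.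

Section Inst.
Variable R : realType.
Local Notation C := (R[i]).
Local Notation nc := (@Normc.normc R).
Variable n : nat.
Local Notation N := n.+1.
Local Notation G := (G3 n).
Local Notation w := (om R N).

Definition ee (k x : G) : C :=
  w ^+ (k.1.1 * x.1.1) * w ^+ (k.1.2 * x.1.2) * w ^+ (k.2 * x.2).

Lemma N0 : (0 < N)%N. Proof. by []. Qed.

Lemma pwD (a b x : nat) : w ^+ (((a + b) %% N) * x) = w ^+ (a * x) * w ^+ (b * x).
Proof. by rewrite (om_mod N0 (modnMml _ _ _)) mulnDl exprD. Qed.

Lemma pwN (a x : nat) : (a < N)%N -> w ^+ (((N - a) %% N) * x) = conjc (w ^+ (a * x)).
Proof.
move=> ha.
rewrite -[LHS]mulr1 -(@omX_unit R N (a * x)) mulrA -exprD.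
rewrite (om_mod N0 (@modNeg N a x (ltnW ha))) exprM om_N // expr1n mul1r //.
Qed.

Lemma vD1 (k m : G) : nat_of_ord (k + m).1.1 = ((k.1.1 + m.1.1) %% N)%N. Proof. by []. Qed.
Lemma vD2 (k m : G) : nat_of_ord (k + m).1.2 = ((k.1.2 + m.1.2) %% N)%N. Proof. by []. Qed.
Lemma vD3 (k m : G) : nat_of_ord (k + m).2 = ((k.2 + m.2) %% N)%N. Proof. by []. Qed.
Lemma vN1 (k : G) : nat_of_ord (- k).1.1 = ((N - k.1.1) %% N)%N. Proof. by []. Qed.
Lemma vN2 (k : G) : nat_of_ord (- k).1.2 = ((N - k.1.2) %% N)%N. Proof. by []. Qed.
Lemma vN3 (k : G) : nat_of_ord (- k).2 = ((N - k.2) %% N)%N. Proof. by []. Qed.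
Lemma v01 : nat_of_ord (0 : G).1.1 = 0%N. Proof. by []. Qed.
Lemma v02 : nat_of_ord (0 : G).1.2 = 0%N. Proof. by []. Qed.
Lemma v03 : nat_of_ord (0 : G).2 = 0%N. Proof. by []. Qed.

Lemma eeD k m x : ee (k + m) x = ee k x * ee m x.
Proof. by rewrite /ee vD1 vD2 vD3 !pwD; ring. Qed.

Lemma eeC k x : ee k x = ee x k.
Proof. by rewrite /ee (mulnC k.1.1) (mulnC k.1.2) (mulnC k.2). Qed.

Lemma ee0 x : ee 0 x = 1.
Proof. by rewrite /ee /= !mul0n !expr0 !mulr1. Qed.

Lemma eeJ k x : conjc (ee k x) = ee (- k) x.
Proof. by rewrite /ee vN1 vN2 vN3 !pwN ?ltn_ord // !rmorphM. Qed.

Lemma sum1D (z : nat) : (z < N)%N ->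
  \sum_(a < N) w ^+ (a * z) = (N%:R) * ((z == 0)%N%:R).
Proof.
move=> hz.
case: (posnP z) => [->|z0].
  under eq_bigr do rewrite muln0 expr0.
  by rewrite sumr_const card_ord /= mulr1.
rewrite /= mulr0.
set v := w ^+ z.
have E : forall a : 'I_N, w ^+ (a * z) = v ^+ a by move=> a; rewrite mulnC exprM.
under eq_bigr do rewrite E.
have v1 : v - 1 != 0.
  apply/negP => /eqP h.
  have := @low R N N0 z hz; rewrite -/v.
  have -> : 1 - v = 0 by rewrite -opprB h oppr0.
  rewrite Normc.normc0 expr0n /= mulr0.
  have : (0 < mm N z)%N by rewrite /mm; lia.
  rewrite -(ltr_nat R) => hp.
  have := mulr_gt0 hp hp; rewrite -expr2; lra.
have : (v - 1) * \sum_(i < N) v ^+ i = 0.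
  by rewrite -subrX1 /v -exprM mulnC exprM om_N // expr1n subrr.
by move/eqP; rewrite mulf_eq0 (negbTE v1) /= => /eqP.
Qed.


Lemma sumG (V : zmodType) (F : G -> V) :
  \sum_k F k = \sum_(a < N) \sum_(b < N) \sum_(c < N) F ((a, b), c).
Proof.
rewrite [RHS]pair_big /= [RHS]pair_big /=.
by apply: eq_bigr => [[[a b] c]] _.
Qed.

Lemma triple_prod (A B D : 'I_N -> C) :
  \sum_(a < N) \sum_(b < N) \sum_(c < N) A a * B b * D c
  = (\sum_(a < N) A a) * (\sum_(b < N) B b) * (\sum_(c < N) D c).
Proof.
rewrite big_distrlr /= big_distrl /=; apply: eq_bigr => a _.
rewrite big_distrl /=; apply: eq_bigr => b _.
by rewrite big_distrr.
Qed.

Lemma cardG : #|(G : finType)| = (N * N * N)%N.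
Proof. by rewrite /G3 !card_prod !card_ord. Qed.

Lemma eeS x : \sum_k ee k x = (#|(G : finType)|%:R) * ((x == 0)%:R).
Proof.
rewrite sumG.
transitivity (\sum_(a < N) \sum_(b < N) \sum_(c < N)
   w ^+ (a * x.1.1) * w ^+ (b * x.1.2) * w ^+ (c * x.2)).
  by apply: eq_bigr => a _; apply: eq_bigr => b _; apply: eq_bigr => c _.
rewrite triple_prod !sum1D ?ltn_ord // cardG.
have -> : (0 : G) = ((0, 0), 0) by [].
case: x => [[a b] c] /=.
rewrite !xpair_eqE -!val_eqE /=.
case: (nat_of_ord a == 0)%N; case: (nat_of_ord b == 0)%N; case: (nat_of_ord c == 0)%N;
  by rewrite /= ?mulr0 ?mul0r ?mulr1 ?natrM.
Qed.


Definition u1 : G := ((inZp 1, 0), 0).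
Definition u2 : G := ((0, inZp 1), 0).
Definition u3 : G := ((0, 0), inZp 1).

Lemma w1 (a : nat) : w ^+ (a * (1 %% N)) = w ^+ a.
Proof. by rewrite (om_mod N0 (modnMmr a 1 N)) muln1. Qed.

Lemma eu1 k : ee k u1 = w ^+ k.1.1.
Proof.
rewrite /ee.
have -> : nat_of_ord u1.1.1 = (1 %% N)%N by [].
try rewrite (_ : nat_of_ord u1.1.2 = 0%N) //.
try rewrite (_ : nat_of_ord u1.2 = 0%N) //.
by rewrite !muln0 !expr0 !mulr1 w1.
Qed.

Lemma eu2 k : ee k u2 = w ^+ k.1.2.
Proof.
rewrite /ee.
try rewrite (_ : nat_of_ord u2.1.1 = 0%N) //.
have -> : nat_of_ord u2.1.2 = (1 %% N)%N by [].
try rewrite (_ : nat_of_ord u2.2 = 0%N) //.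
by rewrite !muln0 !expr0 mul1r mulr1 w1.
Qed.

Lemma eu3 k : ee k u3 = w ^+ k.2.
Proof.
rewrite /ee.
try rewrite (_ : nat_of_ord u3.1.1 = 0%N) //.
try rewrite (_ : nat_of_ord u3.1.2 = 0%N) //.
have -> : nat_of_ord u3.2 = (1 %% N)%N by [].
by rewrite !muln0 !expr0 !mul1r w1.
Qed.

Local Notation sN := ((N%:R : R) ^+ 2).

Lemma lam_low (k : G) :
  ((mm N k.1.1)%:R) ^+ 2 + ((mm N k.1.2)%:R) ^+ 2 + ((mm N k.2)%:R) ^+ 2
  <= @lam R G ee sN u1 u2 u3 k.
Proof.
rewrite /lam eu1 eu2 eu3 !mulrDr.
have h1 := @low R N N0 _ (ltn_ord k.1.1).
have h2 := @low R N N0 _ (ltn_ord k.1.2).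
have h3 := @low R N N0 _ (ltn_ord k.2).
have g1 := sqr_ge0 ((mm N k.1.1)%:R : R).
have g2 := sqr_ge0 ((mm N k.1.2)%:R : R).
have g3 := sqr_ge0 ((mm N k.2)%:R : R).
lra.
Qed.

Lemma hK : \sum_k (1 / (1 + @lam R G ee sN u1 u2 u3 k)) ^+ 2 <= 120.
Proof.
apply: (@le_trans _ _ (\sum_(k : G) 1 / (1 + ((mm N k.1.1)%:R ^+ 2 + (mm N k.1.2)%:R ^+ 2
        + (mm N k.2)%:R ^+ 2)) ^+ 2)).
  apply: ler_sum => k _; rewrite expr_div_n expr1n; apply: inv_mono.
    by rewrite !addr_ge0 ?sqr_ge0.
  exact: lam_low.
rewrite sumG.
apply: le_trans (sum3 R N).
rewrite le_eqVlt; apply/orP; left; apply/eqP; apply: eq_bigr => a _; apply: eq_bigr => b _; apply: eq_bigr => c _; rewrite /= !addrA.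
done.
Qed.

End Inst.

Lemma cplus (N a : nat) : (((a + 1 %% N) %% N).+1 = a.+2 %[mod N])%N.
Proof.
have E : ((a + 1 %% N) %% N).+1 = ((a + 1 %% N) %% N + 1)%N by rewrite addn1.
by rewrite E modnDml addnAC modnDmr !addn1.
Qed.

Lemma cminus (N a : nat) : (0 < N)%N -> (((a + (N - 1 %% N) %% N) %% N).+1 = a %[mod N])%N.
Proof.
move=> N0.
have E : ((a + (N - 1 %% N) %% N) %% N).+1 = ((a + (N - 1 %% N) %% N) %% N + 1)%N by rewrite addn1.
rewrite E modnDml addnAC modnDmr.
have h : (1 %% N <= N)%N by apply: leq_trans (leq_mod 1 N) N0.
have F : ((1 + (N - 1 %% N)) %% N = 0)%N by rewrite -modnDml subnKC // modnn.
by rewrite -addnA -modnDmr F addn0.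
Qed.

Lemma csame (N a : nat) : (a < N)%N -> ((a + 0) %% N = a)%N.
Proof. by move=> h; rewrite addn0 modn_small. Qed.

Lemma csameN (N a : nat) : (a < N)%N -> ((a + (N - 0) %% N) %% N = a)%N.
Proof. by move=> h; rewrite subn0 modnn addn0 modn_small. Qed.

Lemma per_mod (T : Type) (N : nat) (g : int -> T) : (forall z, g (z + N%:Z) = g z) ->
  forall p q : nat, (p = q %[mod N])%N -> g p%:Z = g q%:Z.
Proof.
move=> hg.
have H : forall r c : nat, g (r + N * c)%N%:Z = g r%:Z.
  move=> r; elim=> [|c IH]; first by rewrite muln0 addn0.
  by rewrite mulnS addnCA [(N + _)%N]addnC PoszD hg IH.
move=> p q h.
rewrite (divn_eq p N) (divn_eq q N) h.
by rewrite [(p %/ N * N + _)%N]addnC [(q %/ N * N + _)%N]addnC (mulnC (p %/ N)%N) (mulnC (q %/ N)%N) !H.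
Qed.

Section Final.
Variable R : realType.
Local Notation C := (R[i]).
Local Notation nc := (@Normc.normc R).
Variable n : nat.
Local Notation N := n.+1.
Local Notation G := (G3 n).
Local Notation sN := ((N%:R : R) ^+ 2).

Definition phi_of (f : gridfun R) (x : G) : C :=
  f (x.1.1.+1)%:Z (x.1.2.+1)%:Z (x.2.+1)%:Z.

Lemma intS (a : nat) : ((a.+1)%:Z + 1 = (a.+2)%:Z)%R.
Proof. by rewrite -[in RHS]addn1 PoszD. Qed.

Lemma intP (a : nat) : ((a.+1)%:Z - 1 = a%:Z)%R.
Proof. by rewrite -addn1 PoszD addrK. Qed.

Section Pt.
Variable f : gridfun R.
Hypothesis hp : periodic N f.
Variable x : G.

Lemma P1 : phi_of f (x + u1 n) = f ((x.1.1.+1)%:Z + 1) (x.1.2.+1)%:Z (x.2.+1)%:Z.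
Proof.
rewrite /phi_of intS.
rewrite (_ : nat_of_ord (x + u1 n).1.2 = ((x.1.2 + 0) %% N)%N) // csame //.
rewrite (_ : nat_of_ord (x + u1 n).2 = ((x.2 + 0) %% N)%N) // csame //.
rewrite (_ : nat_of_ord (x + u1 n).1.1 = ((x.1.1 + 1 %% N) %% N)%N) //.
apply: (@per_mod _ N (fun z => f z (x.1.2.+1)%:Z (x.2.+1)%:Z)) => [z|]; first by case: (hp z (x.1.2.+1)%:Z (x.2.+1)%:Z).
exact: cplus.
Qed.

Lemma P1m : phi_of f (x - u1 n) = f ((x.1.1.+1)%:Z - 1) (x.1.2.+1)%:Z (x.2.+1)%:Z.
Proof.
rewrite /phi_of intP.
rewrite (_ : nat_of_ord (x - u1 n).1.2 = ((x.1.2 + (N - 0) %% N) %% N)%N) // csameN //.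
rewrite (_ : nat_of_ord (x - u1 n).2 = ((x.2 + (N - 0) %% N) %% N)%N) // csameN //.
rewrite (_ : nat_of_ord (x - u1 n).1.1 = ((x.1.1 + (N - 1 %% N) %% N) %% N)%N) //.
apply: (@per_mod _ N (fun z => f z (x.1.2.+1)%:Z (x.2.+1)%:Z)) => [z|]; first by case: (hp z (x.1.2.+1)%:Z (x.2.+1)%:Z).
exact: cminus.
Qed.

Lemma P2 : phi_of f (x + u2 n) = f (x.1.1.+1)%:Z ((x.1.2.+1)%:Z + 1) (x.2.+1)%:Z.
Proof.
rewrite /phi_of intS.
rewrite (_ : nat_of_ord (x + u2 n).1.1 = ((x.1.1 + 0) %% N)%N) // csame //.
rewrite (_ : nat_of_ord (x + u2 n).2 = ((x.2 + 0) %% N)%N) // csame //.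
rewrite (_ : nat_of_ord (x + u2 n).1.2 = ((x.1.2 + 1 %% N) %% N)%N) //.
apply: (@per_mod _ N (fun z => f (x.1.1.+1)%:Z z (x.2.+1)%:Z)) => [z|]; first by case: (hp (x.1.1.+1)%:Z z (x.2.+1)%:Z).
exact: cplus.
Qed.

Lemma P2m : phi_of f (x - u2 n) = f (x.1.1.+1)%:Z ((x.1.2.+1)%:Z - 1) (x.2.+1)%:Z.
Proof.
rewrite /phi_of intP.
rewrite (_ : nat_of_ord (x - u2 n).1.1 = ((x.1.1 + (N - 0) %% N) %% N)%N) // csameN //.
rewrite (_ : nat_of_ord (x - u2 n).2 = ((x.2 + (N - 0) %% N) %% N)%N) // csameN //.
rewrite (_ : nat_of_ord (x - u2 n).1.2 = ((x.1.2 + (N - 1 %% N) %% N) %% N)%N) //.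
apply: (@per_mod _ N (fun z => f (x.1.1.+1)%:Z z (x.2.+1)%:Z)) => [z|]; first by case: (hp (x.1.1.+1)%:Z z (x.2.+1)%:Z).
exact: cminus.
Qed.

Lemma P3 : phi_of f (x + u3 n) = f (x.1.1.+1)%:Z (x.1.2.+1)%:Z ((x.2.+1)%:Z + 1).
Proof.
rewrite /phi_of intS.
rewrite (_ : nat_of_ord (x + u3 n).1.1 = ((x.1.1 + 0) %% N)%N) // csame //.
rewrite (_ : nat_of_ord (x + u3 n).1.2 = ((x.1.2 + 0) %% N)%N) // csame //.
rewrite (_ : nat_of_ord (x + u3 n).2 = ((x.2 + 1 %% N) %% N)%N) //.
apply: (@per_mod _ N (fun z => f (x.1.1.+1)%:Z (x.1.2.+1)%:Z z)) => [z|]; first by case: (hp (x.1.1.+1)%:Z (x.1.2.+1)%:Z z).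
exact: cplus.
Qed.

Lemma P3m : phi_of f (x - u3 n) = f (x.1.1.+1)%:Z (x.1.2.+1)%:Z ((x.2.+1)%:Z - 1).
Proof.
rewrite /phi_of intP.
rewrite (_ : nat_of_ord (x - u3 n).1.1 = ((x.1.1 + (N - 0) %% N) %% N)%N) // csameN //.
rewrite (_ : nat_of_ord (x - u3 n).1.2 = ((x.1.2 + (N - 0) %% N) %% N)%N) // csameN //.
rewrite (_ : nat_of_ord (x - u3 n).2 = ((x.2 + (N - 1 %% N) %% N) %% N)%N) //.
apply: (@per_mod _ N (fun z => f (x.1.1.+1)%:Z (x.1.2.+1)%:Z z)) => [z|]; first by case: (hp (x.1.1.+1)%:Z (x.1.2.+1)%:Z z).
exact: cminus.
Qed.

Lemma scal : (((hN R N)%:C)^-2 : C) = sN%:C.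
Proof.
rewrite -rmorphXn -fmorphV /hN; congr (_%:C).
have h : (N%:R : R) != 0 by rewrite pnatr_eq0.
by rewrite div1r exprVn invrK.
Qed.

Lemma lap_pt : phi_of (lap_h N f) x = @Lap R G sN (u1 n) (u2 n) (u3 n) (phi_of f) x.
Proof.
by rewrite /Lap P1 P1m P2 P2m P3 P3m -scal.
Qed.

End Pt.

Lemma nrm_ext (p q : G -> C) : (forall x, p x = q x) -> @nrm R G p = @nrm R G q.
Proof. by move=> h; rewrite /nrm; under eq_bigr do rewrite h. Qed.

Lemma norm2_eq (f : gridfun R) : norm2 N f = @nrm R G (phi_of f).
Proof.
rewrite /norm2 /nrm sumG cardG; congr Num.sqrt; congr (_ * _).
rewrite /hN.
have h : (N%:R : R) != 0 by rewrite pnatr_eq0.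
by rewrite !natrM div1r exprVn !exprS expr0 mulr1 mulrA.
Qed.

Lemma per_gmul (f g : gridfun R) : periodic N f -> periodic N g -> periodic N (gmul f g).
Proof.
move=> hf hg i j k; case: (hf i j k) => a1 a2 a3; case: (hg i j k) => b1 b2 b3.
by split; rewrite /gmul ?a1 ?b1 ?a2 ?b2 ?a3 ?b3.
Qed.

End Final.

Local Close Scope complex_scope.

Theorem proposition4p2 (R : realType) :
  exists C1 : R, 0 < C1 /\
    forall (N : nat) (f g : gridfun R), (0 < N)%N ->
      periodic N f -> periodic N g ->
      norm2 N (lap_h N (gmul f g))
        <= C1 * (norm2 N f + norm2 N (lap_h N f))
              * (norm2 N g + norm2 N (lap_h N g)).
Proof.
exists 3841; split; first lra.
move=> [//|n] f g _ hf hg.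
have hfg := @per_gmul R n f g hf hg.
rewrite !(@norm2_eq R n).
rewrite (@nrm_ext R n _ _ (@lap_pt R n _ hfg)) (@nrm_ext R n _ _ (@lap_pt R n _ hf)) (@nrm_ext R n _ _ (@lap_pt R n _ hg)).
have sN0 : 0 <= ((n.+1)%:R : R) ^+ 2 by apply: sqr_ge0.
have H := @main_abs R (G3 n) (@ee R n) (@eeD R n) (@eeC R n) (@ee0 R n) (@eeS R n) (@eeJ R n)
  _ (u1 n) (u2 n) (u3 n) sN0 120 (@hK R n) (@phi_of R n f) (@phi_of R n g).
rewrite (_ : phi_of R n (gmul f g) = fun x => phi_of R n f x * phi_of R n g x) //.
move: H.
set X := nrm R (G3 n) (Lap R (G3 n) _ _ _ _ (fun x => _)).
set A := (nrm R (G3 n) (phi_of R n f) + _).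
set B := (nrm R (G3 n) (phi_of R n g) + _).
move=> H.
have X0 : 0 <= X by apply: sqrtr_ge0.
have A0 : 0 <= A by apply: addr_ge0; apply: sqrtr_ge0.
have B0 : 0 <= B by apply: addr_ge0; apply: sqrtr_ge0.
have Y0 : 0 <= 3841 * A * B by apply: mulr_ge0 => //; apply: mulr_ge0.
rewrite -(@ler_pXn2r _ 2) // ?nnegrE //.
have -> : (3841 * A * B) ^+ 2 = 3841 ^+ 2 * (A ^+ 2 * B ^+ 2) by ring.
have P0 : 0 <= A ^+ 2 * B ^+ 2 by apply: mulr_ge0; apply: sqr_ge0.
move: H; rewrite -!mulrA; lra.
Qed.
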